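(* Let $G=(V,E)$ be a finite chordal graph. Then for every integer $r\ge 1$, \[ \sum_{\substack{I\in\mathscr{C}(G)\\ |I|\le 2r}} (-1)^{|I|-1} \;\le\; c(G), \] with equality whenever $r\ge |V|/2$.
   Context: A graph is chordal if it contains no cycle of length four or more as an induced subgraph. $\mathscr{C}(G)$ denotes the clique complex of $G$: the set of all non-empty subsets $I\subseteq V$ whose elements are pairwise adjacent in $G$. $c(G)$ denotes the number of connected components of $G$. *)

(* Defs.v *)
(* A finite simple graph G = (V,E) is a finType T with a
   symmetric irreflexive adjacency relation e : rel T. *)
From HB Require Import structures.
From mathcomp Require Import all_boot all_order all_algebra.
Set Implicit Arguments. Unset Strict Implicit. Unset Printing Implicit Defensive.

Definition induced_cycle (T : finType) (e : rel T) (k : nat) (f : 'I_k -> T) :=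
  injective f /\
  forall i j : 'I_k,
    e (f i) (f j) = (val j == (val i).+1 %% k) || (val i == (val j).+1 %% k).

Definition chordal (T : finType) (e : rel T) :=
  forall (k : nat) (f : 'I_k -> T), 4 <= k -> ~ induced_cycle e f.

Definition is_clique (T : finType) (e : rel T) (I : {set T}) : bool :=
  (I != set0) && [forall x in I, forall y in I, (x != y) ==> e x y].

Definition ncomp (T : finType) (e : rel T) : nat := n_comp e T.

Definition clique_sum (T : finType) (e : rel T) (m : nat) : int :=
  (\sum_(I : {set T} | is_clique e I && (#|I| <= m)%N) (-1) ^+ (#|I|).-1)%R.

(* Main.v *)
Require Import Defs.
From HB Require Import structures.
From mathcomp Require Import all_boot all_order all_algebra.
From Stdlib Require Import Lia Classical.
Import GRing.Theory Num.Theory.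
Set Implicit Arguments. Unset Strict Implicit. Unset Printing Implicit Defensive.

Ltac mlia := repeat match goal with
 | H : is_true (_ <= _) |- _ => move/leP: H => H
 | H : is_true (?a == ?b) |- _ => let t := type of a in unify t nat; move/eqP: H => H
 | H : is_true (~~ (?a == ?b)) |- _ => let t := type of a in unify t nat; move/eqP: H => H
 | H : context[addn ?a ?b] |- _ => rewrite -plusE in H
 | H : context[subn ?a ?b] |- _ => rewrite -minusE in H
 | H : context[muln ?a ?b] |- _ => rewrite -multE in H
 | H : context[predn ?a] |- _ => rewrite -subn1 in H
 | |- context[predn ?a] => rewrite -subn1
 | |- _ -> _ => intro
 | |- is_true (_ <= _) => apply/leP
 | |- is_true (?a == ?b) => apply/eqP
 | |- is_true (~~ (?a == ?b)) => apply/eqP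
 | |- context[addn ?a ?b] => rewrite -plusE
 | |- context[subn ?a ?b] => rewrite -minusE
 | |- context[muln ?a ?b] => rewrite -multE
 end;
 repeat match goal with H : context[@size _ _] |- _ => revert H end;
 repeat match goal with |- context[@size ?A ?s] => let n := fresh "sz" in move: (@size A s) => n end;
 intros; lia.

Definition goodp (T : finType) (e : rel T) (D : pred T) (a b x0 : T) (q : seq T) :=
  [/\ 1 < size q, nth x0 q 0 = a, nth x0 q (size q).-1 = b,
     forall i, i.+1 < size q -> e (nth x0 q i) (nth x0 q i.+1)
   & forall i, 0 < i -> i.+1 < size q -> D (nth x0 q i)].

Lemma nth_splice (T : Type) (x0 : T) (q : seq T) k j i : k <= j -> j <= size q ->
  nth x0 (take k q ++ drop j q) i = nth x0 q (if i < k then i else i + (j - k)).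
Proof.
move=> kj jq; rewrite nth_cat size_takel; last by mlia.
case: ltnP => ik; first by rewrite nth_take.
rewrite nth_drop; congr nth; mlia.
Qed.

Lemma goodp_splice (T : finType) (e : rel T) D a b x0 q k j : ~~ e a b ->
  goodp e D a b x0 q ->
  0 < k -> k <= j -> j < size q -> e (nth x0 q k.-1) (nth x0 q j) ->
  goodp e D a b x0 (take k q ++ drop j q).
Proof.
move=> nab [s1 h0 hl hc hD] k0 kj js hkj.
have sz : size (take k q ++ drop j q) = k + (size q - j).
  by rewrite size_cat size_takel ?size_drop //; mlia.
have js' : j <= size q by apply: ltnW.
split.
- rewrite sz; case: (ltnP 1 (k + (size q - j))) => // H; exfalso.
  have k1 : k = 1 by mlia.
  have jl : j = (size q).-1 by mlia.
  by move: hkj; rewrite k1 jl /= h0 hl (negbTE nab).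
- by rewrite nth_splice // k0.
- rewrite sz nth_splice //; case: ltnP => H; first by mlia.
  by rewrite -hl; congr nth; mlia.
- move=> i; rewrite sz => Hi; rewrite !nth_splice //.
  case: (ltnP i k) => H2; case: (ltnP i.+1 k) => H1.
  + by apply: hc; mlia.
  + have -> : i.+1 + (j - k) = j by mlia.
    have -> : i = k.-1 by mlia.
    by [].
  + by exfalso; mlia.
  + have -> : i.+1 + (j - k) = (i + (j - k)).+1 by mlia.
    by apply: hc; mlia.
- move=> i i0; rewrite sz => Hi; rewrite nth_splice //.
  by case: ltnP => H; apply: hD; mlia.
Qed.

Lemma goodp_min (T : finType) (e : rel T) D a b x0 q : a != b -> ~~ e a b ->
  goodp e D a b x0 q ->
  exists q', [/\ goodp e D a b x0 q', uniq q' &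
     forall i j, i.+1 < j -> j < size q' -> ~~ e (nth x0 q' i) (nth x0 q' j)].
Proof.
move=> ab nab.
move: (leqnn (size q)); move: {2}(size q) => n; elim: n q => [|n IH] q sq gq.
  by case: gq => s1; move: sq s1; rewrite leqn0 => /eqP ->.
have IH' : forall q', size q' < size q -> goodp e D a b x0 q' -> exists q'0,
    [/\ goodp e D a b x0 q'0, uniq q'0 &
     forall i j, i.+1 < j -> j < size q'0 -> ~~ e (nth x0 q'0 i) (nth x0 q'0 j)].
  by move=> q' lt g; apply: (IH q') => //; mlia.
have gq' := gq; case: gq' => s1 h0 hl hc hD.
case Hu: (uniq q); last first.
  case/(uniqPn x0): (negbT Hu) => i [j [ij js eqij]].
  case: (ltnP j.+1 (size q)) => jl.
  - apply: (IH' (take i.+1 q ++ drop j.+1 q)).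
      by rewrite size_cat size_takel ?size_drop; mlia.
    apply: goodp_splice => //=; first by mlia.
    rewrite eqij; apply: hc; mlia.
  - have i0 : 0 < i.
      case: i ij eqij => // _; rewrite h0 => ea.
      have jj : j = (size q).-1 by mlia.
      by move: ab; rewrite ea jj hl eqxx.
    apply: (IH' (take i q ++ drop j q)).
      by rewrite size_cat size_takel ?size_drop; mlia.
    apply: goodp_splice => //; first by mlia.
    rewrite -eqij; have -> : i = i.-1.+1 by mlia.
    by rewrite /=; apply: hc; mlia.
have [[i [j [ij [js eij]]]] | nochord] := classic (exists i j,
    i.+1 < j /\ j < size q /\ e (nth x0 q i) (nth x0 q j)).
  apply: (IH' (take i.+1 q ++ drop j q)).
    by rewrite size_cat size_takel ?size_drop; mlia.
  by apply: goodp_splice => //; mlia.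
exists q; split => // i j ij js; apply/negP => eij; apply: nochord.
by exists i, j.
Qed.

Lemma modS_cases n k : n < k -> (n.+1 = k /\ n.+1 %% k = 0) \/ (n.+1 < k /\ n.+1 %% k = n.+1).
Proof.
move=> nk; case: (ltngtP n.+1 k) => H.
- by right; split => //; rewrite modn_small.
- by exfalso; mlia.
- by left; split => //; rewrite H modnn.
Qed.

Lemma cycle_contra (T : finType) (e : rel T) (x x0 : T) q :
  symmetric e -> irreflexive e -> chordal e -> 2 < size q -> uniq q -> x \notin q ->
  (forall i, i.+1 < size q -> e (nth x0 q i) (nth x0 q i.+1)) ->
  (forall i j, i.+1 < j -> j < size q -> ~~ e (nth x0 q i) (nth x0 q j)) ->
  e x (nth x0 q 0) -> e x (nth x0 q (size q).-1) ->
  (forall i, 0 < i -> i.+1 < size q -> ~~ e x (nth x0 q i)) -> False.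
Proof.
move=> sym irr ch s3 uq xq hc hnc hx0 hxl hxi.
pose k := (size q).+1.
have hk : k = (size q).+1 by [].
have hk1 : 1 < k by rewrite hk; mlia.
have key : forall i j, i < k -> j < k -> i <= j ->
  e (nth x0 (x :: q) i) (nth x0 (x :: q) j) = (j == i.+1 %% k) || (i == j.+1 %% k).
  move=> [|i] [|j] ik jk ij /=.
  - by rewrite irr modn_small.
  - rewrite (modn_small hk1).
    case: (modS_cases jk) => [[H ->]|[H ->]].
    + have -> : j = (size q).-1 by mlia.
      by rewrite hxl; apply/esym/orP; right.
    + case: j ij jk H => [|j] ij jk H; first by rewrite hx0.
      have h1 : j.+2 < size q by mlia.
      rewrite (negbTE (hxi j.+1 erefl h1)).
      by apply/esym/norP; split; mlia.
  - by [].
  - case: (modS_cases ik) => [[H ->]|[H ->]];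
    case: (modS_cases jk) => [[H' ->]|[H' ->]];
    (have [ji|ji] := eqVneq j i; [rewrite ji irr; apply/esym/norP; split; mlia |
     have [ji2|ji2] := eqVneq j i.+1; [rewrite ji2 hc; [apply/esym/orP; left; mlia | mlia] |
     rewrite (negbTE (hnc i j _ _)); [apply/esym/norP; split; mlia | mlia | mlia]]]).
apply: (ch k (fun i : 'I_k => nth x0 (x :: q) i)); first by rewrite hk; mlia.
split.
- move=> i j /eqP; rewrite nth_uniq /= ?xq ?uq ?ltn_ord //= => /eqP; apply: val_inj.
- move=> i j; case: (leqP i j) => ij; first by apply: key.
  by rewrite sym orbC; apply: key => //; apply: ltnW.
Qed.

Lemma no_hole (T : finType) (e : rel T) (x a b : T) q :
  symmetric e -> irreflexive e -> chordal e ->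
  a != b -> ~~ e a b -> e x a -> e x b ->
  goodp e (fun z => (z != x) && ~~ e x z) a b x q -> False.
Proof.
move=> sym irr ch ab nab xa xb g.
case: (goodp_min ab nab g) => q' [g' uq hnc]; case: g' => s1 h0 hl hc hD.
apply: (@cycle_contra T e x x q' sym irr ch _ uq _ hc hnc); rewrite ?h0 ?hl //.
- case: (ltnP 2 (size q')) => // H; have s2 : size q' = 2 by mlia.
  move: (hc 0); rewrite s2 h0 => /(_ erefl).
  by move: hl; rewrite s2 /= => ->; rewrite (negbTE nab).
- apply/negP => /(nthP x) [i ilt nx].
  case: i ilt nx => [|i] ilt nx; first by move: xa; rewrite -h0 nx irr.
  case: (ltnP i.+2 (size q')) => H.
    by move: (hD i.+1 erefl H); rewrite nx eqxx.
  have : i.+1 = (size q').-1 by mlia.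
  by move=> E; move: xb; rewrite -hl -E nx irr.
- by move=> i i0 il; case/andP: (hD i i0 il).
Qed.

Lemma goodp_of_path (T : finType) (e : rel T) (D : pred T) a b x0 c1 p :
  e a c1 -> e (last c1 p) b -> path e c1 p -> all D (c1 :: p) ->
  goodp e D a b x0 (a :: rcons (c1 :: p) b).
Proof.
move=> ac lb pp hall.
have ps : forall i, i < size p -> e (nth x0 (c1 :: p) i) (nth x0 (c1 :: p) i.+1).
  by move/(pathP x0): pp.
have hl : nth x0 (c1 :: p) (size p) = last c1 p.
  by rewrite (last_nth c1); apply: set_nth_default.
have h0 : nth x0 (c1 :: p) 0 = c1 by [].
have hs : size (c1 :: p) = (size p).+1 by [].
move: ps hl h0 hs hall; move: (c1 :: p) => s ps hl h0 hs hall.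
split.
- by rewrite /= size_rcons.
- by [].
- by rewrite /= size_rcons /= nth_rcons ltnn eqxx.
- move=> [|i] Hi.
    by rewrite /= nth_rcons hs /= h0.
  rewrite /= size_rcons in Hi; rewrite /= !nth_rcons.
  case: (ltnP i.+1 (size s)) => H1.
    rewrite (_ : i < size s); last by mlia.
    by apply: ps; mlia.
  have E : i.+1 = size s by mlia.
  rewrite (_ : i < size s); last by mlia.
  rewrite E eqxx.
  have -> : i = size p by mlia.
  by rewrite hl.
- move=> [|i] // _ Hi; rewrite /= size_rcons in Hi.
  rewrite /= nth_rcons (_ : i < size s); last by mlia.
  by apply: (allP hall); apply: mem_nth; mlia.
Qed.

Definition cliq (T : finType) (e : rel T) (A : {set T}) :=
  forall u v, u \in A -> v \in A -> u != v -> e u v.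
Definition nbr (T : finType) (e : rel T) (S : {set T}) (w : T) := [set z in S | e w z].

Lemma cliq_sub (T : finType) (e : rel T) (A B : {set T}) :
  A \subset B -> cliq e B -> cliq e A.
Proof. by move=> AB cB u v uA vA; apply: cB; apply: (subsetP AB). Qed.

Lemma connect_last (T : finType) (r : rel T) u v :
  connect r u v -> v = u \/ exists w, r w v.
Proof.
move/connectP=> [p pp ->]; case/lastP: p pp => [|p' z] pp; first by left.
right; exists (last u p'); move: pp; rewrite rcons_path last_rcons.
by case/andP.
Qed.

Lemma simplicial_exists (T : finType) (e : rel T) :
  symmetric e -> irreflexive e -> chordal e ->
  forall n (S K : {set T}), #|S| <= n -> K \subset S -> cliq e K ->
  (exists z, z \in S /\ z \notin K) ->
  exists w, [/\ w \in S, w \notin K & cliq e (nbr e S w)].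
Proof.
move=> sym irr ch; elim=> [|n IH] S K sS KS cK [z [zS zK]].
  by move: sS; rewrite leqn0 => /eqP/cards0_eq SS; rewrite SS inE in zS.
have [x [xS xK]] : exists x, x \in S /\ (K != set0 -> x \in K).
  case: (set_0Vmem K) => [-> | [x xK]]; first by exists z; split => //; rewrite eqxx.
  by exists x; split => //; apply: (subsetP KS).
have [univ | nuniv] := classic (forall y, y \in S -> y != x -> e x y).
  have [[z' [z'S [z'K z'x]]] | none] :=
    classic (exists z', z' \in S /\ z' \notin K /\ z' != x).
  - have [||||w [wS wK wc]] := IH (S :\ x) (K :\ x).
    + by move: sS; rewrite (cardsD1 x S) xS.
    + by apply: setSD.
    + by apply: cliq_sub cK; apply: subsetDl.
    + by exists z'; rewrite !inE z'x z'S z'K.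
    move: wS wK; rewrite !inE => /andP[wx wS] wK.
    exists w; split => //; first by move: wK; rewrite wx.
    move=> u v; rewrite !inE => /andP[uS wu] /andP[vS wv] uv.
    case: (eqVneq u x) => [ux|ux]; first by rewrite ux; apply: univ => //; rewrite -ux eq_sym.
    case: (eqVneq v x) => [vx|vx]; first by rewrite vx sym; apply: univ.
    by apply: wc => //; rewrite !inE ?ux ?vx ?uS ?vS ?wu ?wv.
  - have zx : z = x.
      by apply/eqP; apply/negPn/negP => zx; apply: none; exists z.
    exists x; split => //; first by rewrite -zx.
    apply: (cliq_sub _ cK); apply/subsetP => u; rewrite inE => /andP[uS xu].
    apply/negPn/negP => uK; apply: none; exists u; split => //; split => //.
    by apply/eqP => ux; move: xu; rewrite ux irr.
have [y [yS [yx nxy]]] : exists y, y \in S /\ y != x /\ ~~ e x y.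
  apply: NNPP => H; apply: nuniv => y yS yx; apply/negPn/negP => nxy; apply: H.
  by exists y.
pose Dp := fun z => [&& z \in S, z != x & ~~ e x z].
pose eD := [rel u v | [&& Dp u, Dp v & e u v]].
have eDsym : symmetric eD by move=> u v; rewrite /= andbCA sym.
pose C := [set z | connect eD y z].
have CD : forall z, z \in C -> Dp z.
  move=> z'; rewrite inE => /connect_last [-> | [w /and3P[_ -> _]]] //.
  by rewrite /Dp yS yx nxy.
have Cclos : forall c z, c \in C -> Dp z -> e c z -> z \in C.
  move=> c z0 cC Dz cz; rewrite inE; apply: (connect_trans (_ : connect eD y c)).
    by rewrite inE in cC.
  by apply: connect1; rewrite /= CD // Dz cz.
pose M := [set z in S | (z \notin C) && [exists c in C, e c z]].
have Mx : forall z, z \in M -> e x z.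
  move=> z0; rewrite !inE => /and3P[zS0 zC /existsP[c /andP[cC cz]]].
  apply/negPn/negP => nxz; case: (eqVneq z0 x) => zx.
  - have := CD c cC; rewrite /Dp -zx sym cz.
    by case/and3P.
  - have zC' : z0 \in C by apply: (Cclos c z0 cC _ cz); rewrite /Dp zS0 zx nxz.
    by rewrite inE in zC'; rewrite zC' in zC.
have Mc : cliq e M.
  move=> m1 m2 m1M m2M m12; apply/negPn/negP => nm.
  move: (m1M) (m2M); rewrite !inE.
  move=> /and3P[_ _ /existsP[c1 /andP[c1C c1m]]] /and3P[_ _ /existsP[c2 /andP[c2C c2m]]].
  have : connect eD c1 c2.
    rewrite inE in c1C; rewrite inE in c2C.
    rewrite (sym_connect_sym eDsym) in c1C; exact: connect_trans c1C c2C.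
  case/connectP => p pp lp.
  apply: (@no_hole T e x m1 m2 (m1 :: rcons (c1 :: p) m2) sym irr ch m12 nm
     (Mx _ m1M) (Mx _ m2M)).
  apply: goodp_of_path.
  - by rewrite sym.
  - by rewrite -lp.
  - by apply: sub_path pp => u v /and3P[].
  - apply/allP => z0 zp; have := path_connect pp zp => c1z.
    have : z0 \in C.
      rewrite inE; rewrite inE in c1C; exact: connect_trans c1C c1z.
    by move/CD => /and3P[_ -> ->].
pose S' := C :|: M.
have S'S : S' \subset S.
  apply/subsetP => z0; rewrite inE => /orP[/CD /and3P[]// | ].
  by rewrite inE => /andP[].
have xS' : x \notin S'.
  rewrite inE negb_or; apply/andP; split.
    by apply/negP => /CD; rewrite /Dp eqxx andbF.
  by apply/negP => /Mx; rewrite irr.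
have ltS : #|S'| < #|S|.
  by apply: proper_card; apply/properP; split => //; exists x.
have [||||w [wS' wM wc]] := IH S' M.
- by mlia.
- by apply: subsetUr.
- by apply: Mc.
- exists y; split; first by rewrite inE inE connect0.
  by rewrite /M !inE connect0 /= andbF.
have wC : w \in C by move: wS'; rewrite inE (negbTE wM) orbF.
exists w; split.
- by have := CD w wC => /and3P[].
- apply/negP => wK.
  have Kn : K != set0 by apply/set0Pn; exists w.
  have xK' := xK Kn.
  have := CD w wC => /and3P[_ wx nxw].
  by move: nxw; rewrite (cK x w xK' wK _) // eq_sym.
- apply: cliq_sub wc; apply/subsetP => u; rewrite !inE => /andP[uS wu].
  rewrite wu andbT uS /=.
  case uC: (connect eD y u) => //=.
  by apply/existsP; exists w; rewrite wC wu.
Qed.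

Definition eS (T : finType) (e : rel T) (S : {set T}) :=
  [rel a b | [&& a \in S, b \in S & e a b]].
Definition cls (T : finType) (e : rel T) (S : {set T}) u :=
  [set v in S | connect (eS e S) u v].
Definition comps (T : finType) (e : rel T) (S : {set T}) :=
  #|cls e S @: S|.

Lemma eS_sym (T : finType) (e : rel T) (S : {set T}) : symmetric e -> symmetric (eS e S).
Proof. by move=> sym a b; rewrite /= andbCA sym. Qed.

Lemma cls_same (T : finType) (e : rel T) (S : {set T}) u v : symmetric e ->
  connect (eS e S) u v -> cls e S u = cls e S v.
Proof.
move=> sym uv; apply/setP => z.
by rewrite !inE (same_connect (sym_connect_sym (eS_sym S sym)) uv).
Qed.

Lemma conn_mono (T : finType) (e : rel T) (S S' : {set T}) :
  S' \subset S -> subrel (connect (eS e S')) (connect (eS e S)).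
Proof.
move=> sub; apply: connect_sub => a b /and3P[aS bS ab]; apply: connect1.
by rewrite /= (subsetP sub _ aS) (subsetP sub _ bS).
Qed.

Lemma conn_remove (T : finType) (e : rel T) (S : {set T}) (w : T) : symmetric e -> irreflexive e ->
  cliq e (nbr e S w) ->
  forall u p, u \in S :\ w -> path (eS e S) u p ->
   (last u p \in S :\ w -> connect (eS e (S :\ w)) u (last u p)) /\
   (last u p = w -> exists n, n \in nbr e S w /\ connect (eS e (S :\ w)) u n).
Proof.
move=> sym irr cN u p uS'; elim/last_ind: p => [|p z IH] /=.
  move=> _; split; first by rewrite connect0.
  by move=> uw; move: uS'; rewrite uw !inE eqxx.
rewrite rcons_path last_rcons => /andP[pp /and3P[lS zS lz]].
have [IH1 IH2] := IH pp.
split.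
- move=> zS'; case: (eqVneq (last u p) w) => lw.
  + have [n [nN un]] := IH2 lw.
    have zN : z \in nbr e S w by rewrite inE zS -lw lz.
    case: (eqVneq n z) => [<- //|nz].
    apply: (connect_trans un); apply: connect1.
    move: (nN); rewrite inE => /andP[nS wn].
    have nS' : n \in S :\ w by rewrite !inE nS andbT; apply/eqP => nw; move: wn; rewrite nw irr.
    by rewrite /= nS' zS' (cN n z nN zN nz).
  + have lS' : last u p \in S :\ w by rewrite !inE lw lS.
    by apply: (connect_trans (IH1 lS')); apply: connect1; rewrite /= lS' zS' lz.
- move=> zw; exists (last u p); split.
    by rewrite inE lS; rewrite zw in lz; rewrite sym.
  apply: IH1; rewrite !inE lS andbT; apply/eqP => lw.
  by move: lz; rewrite lw zw irr.
Qed.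

Lemma comps_rec (T : finType) (e : rel T) (S : {set T}) (w : T) : symmetric e -> irreflexive e ->
  w \in S -> cliq e (nbr e S w) ->
  comps e S = comps e (S :\ w) + (nbr e S w == set0).
Proof.
move=> sym irr wS cN.
have hA : forall u v, u \in S :\ w -> v \in S :\ w ->
    connect (eS e S) u v = connect (eS e (S :\ w)) u v.
  move=> u v uS' vS'; apply/idP/idP.
    case/connectP => p pp vE; rewrite vE; apply: (conn_remove sym irr cN uS' pp).1.
    by rewrite -vE.

  by apply: conn_mono; apply: subsetDl.
have csym := sym_connect_sym (eS_sym S sym).
have hS : S = w |: (S :\ w) by rewrite setD1K.
have [N0 | [n nN]] := set_0Vmem (nbr e S w).
- rewrite N0 eqxx addn1.
  have iso : forall v, connect (eS e S) w v -> v = w.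
    move=> v /connectP [[|z p] pp ->] //=.
    move: pp => /= /andP[/and3P[_ zS wz] _].
    have : z \in nbr e S w by rewrite inE zS wz.
    by rewrite N0 inE.
  have cw : cls e S w = [set w].
    apply/setP => v; rewrite !inE; apply/andP/eqP => [[_ /iso //] | ->].
    by rewrite wS connect0.
  have cu : forall u, u \in S :\ w -> cls e S u = cls e (S :\ w) u.
    move=> u uS'; apply/setP => v; rewrite !inE.
    case: (eqVneq v w) => [->|vw] /=.
      apply/negP => /andP[_]; rewrite csym => /iso uw.
      by move: uS'; rewrite uw !inE eqxx.
    by case vS: (v \in S) => //=; apply: hA => //; rewrite !inE vw vS.
  rewrite /comps.
  have -> : (cls e S @: S) = cls e S w |: (cls e S @: (S :\ w)).
    by rewrite -imsetU1 -hS.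
  rewrite (eq_in_imset cu) cardsU1 cw.
  suff -> : [set w] \notin cls e (S :\ w) @: (S :\ w) by rewrite add1n.
  apply/negP => /imsetP [u uS' E].
  have : u \in cls e (S :\ w) u by rewrite inE uS' connect0.
  rewrite -E inE => /eqP uw; by move: uS'; rewrite uw !inE eqxx.
- rewrite (_ : (nbr e S w == set0) = false) ?addn0; last first.
    by apply/negbTE/set0Pn; exists n.
  move: (nN); rewrite inE => /andP[nS wn].
  have nS' : n \in S :\ w.
    by rewrite !inE nS andbT; apply/eqP => nw; move: wn; rewrite nw irr.
  pose h u := if u == w then n else u.
  have hS' : forall u, u \in S -> h u \in S :\ w.
    move=> u uS; rewrite /h; case: (eqVneq u w) => // uw.
    by rewrite !inE uw uS.
  have cuh : forall u, u \in S -> cls e S u = cls e S (h u).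
    move=> u uS; rewrite /h; case: (eqVneq u w) => // ->.
    by apply: cls_same => //; apply: connect1; rewrite /= wS nS wn.
  have key : forall u, u \in S -> cls e S u :\ w = cls e (S :\ w) (h u).
    move=> u uS; rewrite (cuh u uS); apply/setP => v; rewrite !inE.
    case: (eqVneq v w) => //= vw; case vS: (v \in S) => //=.
    by apply: hA; [apply: hS' | rewrite !inE vw vS].
  rewrite /comps.
  have E : (cls e (S :\ w) @: (S :\ w)) =
           [set (fun C => C :\ w) C | C in (cls e S @: S)].
    rewrite -imset_comp; apply/setP => C; apply/imsetP/imsetP.
      move=> [u uS' ->]; have uS : u \in S by move: uS'; rewrite !inE => /andP[].
      exists u => //; rewrite /= key //; congr cls.
      by rewrite /h; move: uS'; rewrite !inE => /andP[/negbTE ->].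
    by move=> [u uS ->]; exists (h u); [apply: hS' | rewrite /= key].
  rewrite E; apply/esym; apply: card_in_imset.
  move=> C1 C2 /imsetP[u1 u1S ->] /imsetP[u2 u2S ->] /= Eq.
  have t1 : h u1 \in cls e S u1 :\ w by rewrite key // inE hS' // connect0.
  move: t1; rewrite Eq key // inE => /andP[_ c21].
  rewrite (cuh u1 u1S) (cuh u2 u2S); apply: esym; apply: cls_same => //.
  by apply: conn_mono c21; apply: subsetDl.
Qed.

Lemma sub_sum_k (T : finType) (N : {set T}) k :
  (\sum_(J : {set T} | (J \subset N) && (#|J| == k)%N) (-1) ^+ #|J|
     = (-1) ^+ k * ('C(#|N|, k))%:R :> int)%R.
Proof.
rewrite (eq_bigr (fun _ => (-1) ^+ k)%R); last by move=> J /andP[_ /eqP ->].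
rewrite -cards_draws (eq_bigl (fun J => J \in [set J : {set T} | J \subset N & #|J| == k])).
  by rewrite sumr_const mulr_natr.
by move=> J; rewrite inE.
Qed.

Lemma sub_sum (T : finType) (N : {set T}) n :
  (\sum_(J : {set T} | (J \subset N) && (#|J| <= n)%N) (-1) ^+ #|J|
     = \sum_(j < n.+1) (-1) ^+ j * ('C(#|N|, j))%:R :> int)%R.
Proof.
elim: n => [|n IH].
  by rewrite big_ord1 -sub_sum_k; apply: eq_bigl => J; rewrite leqn0.
rewrite big_ord_recr /= -IH -sub_sum_k (bigID (fun J : {set T} => #|J| <= n)) /=.
congr (_ + _)%R; apply: eq_bigl => J.
  case: (J \subset N) => //=; apply/andP/idP => [[]|H]; [|split]; mlia.
rewrite -ltnNge; case: (J \subset N) => //=; apply/andP/idP => [[]|H]; [|split]; mlia.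
Qed.

Lemma alt_binom d n :
  (\sum_(j < n.+1) (-1) ^+ j * ('C(d.+1, j))%:R = (-1) ^+ n * ('C(d, n))%:R :> int)%R.
Proof.
elim: n => [|n IH]; first by rewrite big_ord1 !bin0.
rewrite big_ord_recr /= IH binS natrD exprS mulN1r !mulNr mulrDr opprD addrA.
by rewrite addrAC subrr add0r.
Qed.

Lemma alt_binom0 n :
  (\sum_(j < n.+1) (-1) ^+ j * ('C(0, j))%:R = 1 :> int)%R.
Proof.
rewrite big_ord_recl big1 ?addr0 ?bin0 ?mulr1 ?expr0 //.
by move=> j _; rewrite bin0n /= mulr0.
Qed.

Definition cs (T : finType) (e : rel T) (m : nat) (S : {set T}) : int :=
  (\sum_(I : {set T} | is_clique e I && (I \subset S) && (#|I| <= m)%N) (-1) ^+ (#|I|).-1)%R.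

Lemma add_clique (T : finType) (e : rel T) m (S J : {set T}) w :
  symmetric e -> irreflexive e -> (0 < m)%N -> w \in S -> cliq e (nbr e S w) ->
  ((is_clique e (w |: J) && ((w |: J) \subset S) && (#|w |: J| <= m)%N)
     && (w \in w |: J)) && ((w |: J) :\ w == J)
  = (J \subset nbr e S w) && (#|J| <= m.-1)%N.
Proof.
move=> sym irr m0 wS cN; apply/idP/idP.
  move=> /andP[/andP[/andP[/andP[cl sub] sz] _] /eqP E].
  have wJ : w \notin J by move: (setD11 w (w |: J)); rewrite E => ->.
  move: sz; rewrite cardsU1 wJ /= => sz; apply/andP; split; last by mlia.
  apply/subsetP => v vJ; rewrite inE (subsetP sub v (setU1r _ vJ)) /=.
  case/andP: cl => _ /forallP /(_ w); rewrite setU11 /= => /forallP /(_ v).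
  rewrite (setU1r _ vJ) /= => /implyP; apply.
  by apply/eqP => vw; move: wJ; rewrite vw vJ.
move=> /andP[JN sz].
have wJ : w \notin J.
  by apply/negP => /(subsetP JN); rewrite inE irr andbF.
rewrite setU1K // eqxx andbT setU11 andbT cardsU1 wJ /=.
have -> : (1 + #|J| <= m)%N by mlia.
rewrite andbT; apply/andP; split.
  rewrite /is_clique; apply/andP; split; first by apply/set0Pn; exists w; rewrite setU11.
  apply/forallP => x; apply/implyP => xI; apply/forallP => y; apply/implyP => yI.
  apply/implyP => xy.
  move: xI yI; rewrite !in_setU1 => /orP[/eqP xw|xJ] /orP[/eqP yw|yJ].
  - by move: xy; rewrite xw yw eqxx.
  - by move: (subsetP JN y yJ); rewrite inE xw => /andP[].
  - by move: (subsetP JN x xJ); rewrite inE yw sym => /andP[].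
  - by apply: cN => //; apply: (subsetP JN).
apply/subsetP => v; rewrite in_setU1 => /orP[/eqP -> //|vJ].
by move: (subsetP JN v vJ); rewrite inE => /andP[].
Qed.

Lemma cs_rec (T : finType) (e : rel T) m (S : {set T}) w :
  symmetric e -> irreflexive e -> (0 < m)%N -> w \in S -> cliq e (nbr e S w) ->
  cs e m S = (cs e m (S :\ w) +
    \sum_(J : {set T} | (J \subset nbr e S w) && (#|J| <= m.-1)%N) (-1) ^+ #|J|)%R.
Proof.
move=> sym irr m0 wS cN.
rewrite /cs (bigID (fun I : {set T} => w \in I)) /= addrC; congr (_ + _)%R.
  apply: eq_bigl => I; rewrite subsetD1.
  by case: (is_clique e I); case: (I \subset S); case: (w \in I); case: (#|I| <= m)%N.
rewrite (reindex_onto (fun J => w |: J) (fun I => I :\ w)) /=; last first.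
  by move=> I /andP[_ wI]; apply: setD1K.
apply: eq_big => J; first by rewrite add_clique.
move=> /andP[_ /eqP E].
have wJ : w \notin J by move: (setD11 w (w |: J)); rewrite E => ->.
by rewrite cardsU1 wJ.
Qed.

Lemma cs_set0 (T : finType) (e : rel T) m : cs e m set0 = 0%R.
Proof.
rewrite /cs big_pred0 // => I; rewrite subset0.
case: (eqVneq I set0) => [->|]; first by rewrite /is_clique eqxx.
by rewrite andbF.
Qed.

Lemma comps_set0 (T : finType) (e : rel T) : comps e set0 = 0.
Proof. by rewrite /comps imset0 cards0. Qed.

Lemma main_ind (T : finType) (e : rel T) r :
  symmetric e -> irreflexive e -> chordal e -> (0 < r)%N ->
  forall n (S : {set T}), (#|S| <= n)%N ->
  (cs e (2 * r) S <= Posz (comps e S))%R /\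
  ((#|S| <= 2 * r)%N -> cs e (2 * r) S = Posz (comps e S)).
Proof.
move=> sym irr ch r0; elim=> [|n IH] S sS;
  case: (set_0Vmem S) => [->|[z zS]]; rewrite ?cs_set0 ?comps_set0 //.
  by move: sS; rewrite leqn0 => /eqP/cards0_eq S0; rewrite S0 inE in zS.
have m0 : (0 < 2 * r)%N by mlia.
have [w [wS _ wc]] : exists w, [/\ w \in S, w \notin set0 & cliq e (nbr e S w)].
  apply: (simplicial_exists sym irr ch (leqnn #|S|)); first by apply: sub0set.
    by move=> u v; rewrite inE.
  by exists z; rewrite inE.
have sS' : #|S :\ w| = #|S|.-1 by rewrite (cardsD1 w S) wS.
have hlt : (#|S :\ w| <= n)%N by rewrite sS'; mlia.
have [IH1 IH2] := IH (S :\ w) hlt.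
rewrite (cs_rec sym irr m0 wS wc) (comps_rec sym irr wS wc) sub_sum.
have [N0|[v vN]] := set_0Vmem (nbr e S w).
  rewrite N0 cards0 alt_binom0 eqxx PoszD; split; first by rewrite lerD2r.
  by move=> H; rewrite IH2 //; mlia.
have Ngt : (0 < #|nbr e S w|)%N by apply/card_gt0P; exists v.
rewrite (_ : #|nbr e S w| = (#|nbr e S w|.-1).+1); last by mlia.
rewrite alt_binom (_ : (nbr e S w == set0) = false) ?addn0; last first.
  by apply/negbTE/set0Pn; exists v.
split.
  apply: ler_wnDr => //.
  rewrite -signr_odd (_ : odd (2 * r).-1 = true); last first.
    rewrite (_ : (2 * r).-1 = (r.-1 * 2).+1); last by mlia.
    by rewrite /= oddM andbF.
  by rewrite expr1 mulN1r oppr_le0 ler0n.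
move=> H; rewrite bin_small ?mulr0 ?addr0; first by apply: IH2; mlia.
have : (#|nbr e S w| <= #|S :\ w|)%N.
  apply: subset_leq_card; apply/subsetP => u; rewrite !inE => /andP[uS wu].
  by rewrite uS andbT; apply/eqP => uw; move: wu; rewrite uw irr.
by mlia.
Qed.

Theorem proposition2 (T : finType) (e : rel T)
  (e_sym : symmetric e) (e_irr : irreflexive e) (e_chordal : chordal e)
  (r : nat) (hr : 1 <= r) :
  (clique_sum e (2 * r) <= Posz (ncomp e))%R /\
  (#|T| <= 2 * r -> clique_sum e (2 * r) = Posz (ncomp e)).
Proof.
have [H1 H2] := main_ind e_sym e_irr e_chordal hr (leqnn #|[set: T]|).
have E1 : clique_sum e (2 * r) = cs e (2 * r) [set: T].
  by rewrite /clique_sum /cs; apply: eq_bigl => I; rewrite subsetT andbT.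
have conE : connect (eS e [set: T]) =2 connect e.
  by apply: eq_connect => a b; rewrite /= !inE.
have csym := sym_connect_sym e_sym.
pose cl u := [set v | connect e u v].
have cE : forall u, cls e [set: T] u = cl u.
  by move=> u; apply/setP => v; rewrite !inE conE.
have E2 : ncomp e = comps e [set: T].
  rewrite /comps (eq_imset _ cE) /ncomp.
  have -> : n_comp e T = #|[set u | roots e u]|.
    by apply: eq_card => u; rewrite !inE /= andbT.
  rewrite -(card_in_imset (f := cl)); last first.
    move=> u v; rewrite !inE => ru rv E.
    have : v \in cl v by rewrite inE connect0.
    rewrite -E inE => /(fingraph.rootP csym).
    by rewrite (eqP ru) (eqP rv).
  suff -> : [set cl x | x : T & roots e x] = [set cl x | x in [set: T]] by [].
  apply/setP => C; apply/imsetP/imsetP => [[u _ ->]|[u _ ->]].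
    by exists u.
  exists (fingraph.root e u); first by rewrite inE fingraph.roots_root.
  apply/setP => v; rewrite !inE; apply: (same_connect csym).
  exact: connect_root.
split; first by rewrite E1 E2.
by move=> H; rewrite E1 E2; apply: H2; rewrite cardsT.
Qed.
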